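(* Let $n\ge1$ and let $p=p_1\cdots p_{n-1}1$ be a strongly 312-avoiding permutation of $\{1,\dots,n\}$ ending in the entry $1$. Then the smallest $\lceil n/2\rceil$ entries of $p$ occupy the last $\lceil n/2\rceil$ positions in decreasing order; that is, $p_{n-j+1}=j$ for all $j=1,\dots,\lceil n/2\rceil$.
   Context: Permutations are written in one-line notation $p=p_1\cdots p_n$ with $p_i=p(i)$. $p$ contains a pattern $q=q_1\cdots q_m$ if there are indices $i_1<\cdots<i_m$ with $p_{i_r}<p_{i_s}$ iff $q_r<q_s$; otherwise $p$ avoids $q$. $p^2(i)=p(p(i))$. A permutation $p$ is strongly $q$-avoiding if both $p$ and $p^2$ avoid $q$. *)

(* Defs.v *)
(* Permutations of {1..n} are modelled as {perm 'I_n},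
   i.e. 0-based: entry value v+1 <-> ordinal value v, position i+1 <-> ordinal i. *)
From mathcomp Require Import all_boot all_fingroup.
Set Implicit Arguments. Unset Strict Implicit. Unset Printing Implicit Defensive.

Definition contains312 (n : nat) (f : 'I_n -> 'I_n) : Prop :=
  exists i j k : 'I_n, [/\ i < j, j < k & f j < f k < f i].

Definition avoids312 (n : nat) (f : 'I_n -> 'I_n) : Prop := ~ contains312 f.

Definition strongly_avoids312 (n : nat) (p : {perm 'I_n}) : Prop :=
  avoids312 (fun i => p i) /\ avoids312 (fun i => p (p i)).

(* Main.v *)
Require Import Defs.
From mathcomp Require Import all_boot all_fingroup zify.
Set Implicit Arguments. Unset Strict Implicit. Unset Printing Implicit Defensive.

Lemma count_inj n (f : 'I_n.+1 -> 'I_n.+1) : injective f -> forall lo hi lo' hi',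
  hi <= n.+1 -> (forall i : 'I_n.+1, lo <= i < hi -> lo' <= f i < hi') -> hi - lo <= hi' - lo'.
Proof.
move=> finj lo hi lo' hi' hn H.
have : size (map (fun k => nat_of_ord (f (inord k))) (iota lo (hi-lo))) <= size (iota lo' (hi'-lo')).
  apply: uniq_leq_size.
  - rewrite map_inj_in_uniq ?iota_uniq // => a b; rewrite !mem_iota => /andP[a1 a2] /andP[b1 b2] /val_inj /finj /(congr1 (@nat_of_ord _)).
    rewrite !inordK //; lia.
  - move=> v /mapP [k]; rewrite mem_iota => /andP[k1 k2] ->. rewrite mem_iota.
    have := H (inord k). rewrite inordK; last lia. move=> /(_ ltac:(lia)). lia.
by rewrite size_map !size_iota.
Qed.

Theorem lemma3p4 (n : nat) (hn : 0 < n) (p : {perm 'I_n}) :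
  strongly_avoids312 p ->
  (forall last : 'I_n, val last = n.-1 -> val (p last) = 0) ->
  forall (j : nat) (i : 'I_n), 1 <= j <= uphalf n -> val i = n - j ->
    val (p i) = j.-1.
Proof.
case: n hn p => [//|n'] _ p [A1 A2] hlast t i ht hi.
change (nat_of_ord (p i) = t.-1). change (nat_of_ord i = n'.+1 - t) in hi.
pose o k : 'I_n'.+1 := inord k.
have oK k : k <= n' -> nat_of_ord (o k) = k by move=> hk; rewrite /o inordK.
have plast : nat_of_ord (p (o n')) = 0 by apply: hlast; rewrite /= inordK.
have tb : 2 * (t.-1) + 1 <= n'.+1.
  have h2 := odd_double_half n'. rewrite -muln2 in h2. move: ht; rewrite /=.
  case: (odd n') h2 => /= h2; lia.
have inj : forall a b, nat_of_ord (p a) = nat_of_ord (p b) -> a = b.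
  by move=> a b /val_inj /perm_inj.
have C1 : forall a b c : 'I_n'.+1, a < b -> b < c -> p b < p c -> p c < p a -> False.
  by move=> a b c h1 h2 h3 h4; apply: A1; exists a, b, c; split => //; rewrite h3 h4.
have C2 : forall a b c : 'I_n'.+1, a < b -> b < c -> p (p b) < p (p c) -> p (p c) < p (p a) -> False.
  by move=> a b c h1 h2 h3 h4; apply: A2; exists a, b, c; split => //; rewrite h3 h4.
case: (posnP n') => [n0|npos].
  have ei : i = o n' by apply: val_inj; rewrite /= inordK; lia.
  rewrite ei plast; lia.
pose jj := (p^-1)%g (o n').
have hjj : nat_of_ord (p jj) = n' by rewrite /jj permKV oK.
have J0 : jj < n'.
  have : jj != o n' by apply/eqP => e; move: plast; rewrite -e hjj; lia.
  move/eqP => ne. have := ltn_ord jj. case: (ltngtP jj n') => //; try lia.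
  move=> e; exfalso; apply: ne; apply: val_inj; rewrite /= inordK //.
have F1 : forall a b : 'I_n'.+1, jj <= a -> a < b -> p b < p a.
  move=> a b h1 h2. have pb := ltn_ord (p b).
  case: (ltngtP (p b) (p a)) => // [h|/inj e]; last by move: h2; rewrite e; lia.
  case: (ltngtP jj a) => [h3|h3|e]; last first.
    have ea : a = jj by apply: val_inj; rewrite /= -e.
    by move: h; rewrite ea hjj; lia.
    by lia.
  exfalso; apply: (C1 jj a b) => //. rewrite hjj.
  have : p b != n' :> nat by apply/eqP => e; move: h2 h3; rewrite (inj _ _ (etrans e (esym hjj))); lia.
  lia.
have pon : p (o n') = o 0 by apply: val_inj; rewrite /= plast oK.
have F2 : forall a b : 'I_n'.+1, a < jj -> jj < b -> p (p a) < p (p b).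
  move=> a b h1 h2.
  case: (ltngtP (p (p a)) (p (p b))) => // [h|/inj/perm_inj e]; last by move: h1 h2; rewrite e; lia.
  exfalso; apply: (C2 a jj b) => //.
  rewrite /jj permKV pon oK //.
  have : p (p b) != 0 :> nat.
    apply/eqP => e; have E := inj _ _ (etrans e (esym plast)); move: h2; rewrite (inj b jj (etrans (congr1 (@nat_of_ord _) E) (etrans (oK _ (leqnn _)) (esym hjj)))); lia.
  lia.
pose xj := (p^-1)%g jj.
have hxj : p xj = jj by rewrite /xj permKV.
have F3 : jj < xj.
  case: (ltngtP jj xj) => // [h|e].
    have := F2 _ (o n') h. rewrite oK // => /(_ ltac:(lia)). rewrite hxj hjj pon.
    have := ltn_ord (p (o 0)). lia.
  have exj : xj = jj by apply: val_inj; rewrite /= -e.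
  move: hjj; rewrite -{1}exj hxj; lia.
have F4 : forall a : 'I_n'.+1, a < jj -> jj < p a.
  move=> a h.
  case: (ltngtP jj (p a)) => // [h1|e]; last first.
    have : p a = p xj by apply: val_inj; rewrite hxj /= e.
    by move/perm_inj => e2; move: h F3; rewrite e2; lia.
  exfalso.
  case: (ltngtP (p (o 0)) jj) => [h0|h0|e0].
  - have := @count_inj _ (fun x => p (p x)) (fun x y e => perm_inj (perm_inj e)) 0 jj 1 (p (o 0)).
    move=> /(_ ltac:(lia)).
    have H : forall i0 : 'I_n'.+1, 0 <= i0 < jj -> 1 <= p (p i0) < p (o 0).
      move=> i0 /andP[_ hi0]. have := F2 _ (o n') hi0. rewrite oK // pon => /(_ ltac:(lia)) ->.
      rewrite andbT lt0n; apply/eqP => e; have E := inj _ _ (etrans e (esym plast)); move: hi0; rewrite (inj i0 jj (etrans (congr1 (@nat_of_ord _) E) (etrans (oK _ (leqnn _)) (esym hjj)))); lia.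
    move=> /(_ H). lia.
  - have a0 : 0 < a.
      case: (posnP a) => // a0. have : a = o 0 by apply: val_inj; rewrite /= a0 oK.
      by move=> e; move: h1 h0; rewrite e; lia.
    apply: (C1 (o 0) a xj); rewrite ?hxj ?oK //; lia.
  - have : o 0 = xj by apply: inj; rewrite hxj e0.
    move=> e; move: F3; rewrite -e oK //; lia.
have F5 : 2 * jj + 2 <= n'.+1.
  have := @count_inj _ (fun x => p x) (@perm_inj _ p) 0 jj jj.+1 n'.
  move=> /(_ ltac:(lia)).
  have H : forall i0 : 'I_n'.+1, 0 <= i0 < jj -> jj.+1 <= p i0 < n'.
    move=> i0 /andP[_ hi0]. have := F4 _ hi0. have := ltn_ord (p i0).
    have : p i0 != n' :> nat by apply/eqP => e; move: hi0; rewrite (inj _ _ (etrans e (esym hjj))); lia.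
    lia.
  move=> /(_ H). lia.
have F7 : forall a : 'I_n'.+1, a < jj -> p (p a) <= jj.
  move=> a ha. case: (leqP (p (p a)) jj) => // hgt. exfalso.
  have := @count_inj _ (fun x => p (p x)) (fun x y e => perm_inj (perm_inj e)) jj.+1 n'.+1 jj.+2 n'.+1.
  move=> /(_ ltac:(lia)).
  have H : forall i0 : 'I_n'.+1, jj.+1 <= i0 < n'.+1 -> jj.+2 <= p (p i0) < n'.+1.
    move=> i0 /andP[hi0 _]. have := F2 _ _ ha hi0. have := ltn_ord (p (p i0)). lia.
  move=> /(_ H). lia.
have main : forall t, (forall s, s < t -> nat_of_ord (p (o (n' - s))) = s) ->
    2 * t + 1 <= n'.+1 -> nat_of_ord (p (o (n' - t))) = t.
  move=> u IH hu.
  pose y := o (n' - u). have hy : nat_of_ord y = n' - u by rewrite oK //; lia.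
  pose x := (p^-1)%g (o u). have hx : nat_of_ord (p x) = u by rewrite /x permKV oK //; lia.
  have jy : jj < y by rewrite hy; lia.
  have pyu : u <= p y.
    case: (leqP u (p y)) => // h. exfalso.
    have := IH _ h. rewrite -[in RHS]/(nat_of_ord (p y)) => /inj /(congr1 (@nat_of_ord _)).
    rewrite oK ?hy; lia.
  change (nat_of_ord (p y) = u). case: (eqVneq (nat_of_ord (p y)) u) => [//|ne].
  have h : u < p y by move: ne pyu; lia.
  exfalso.
  case: (ltngtP x y) => [hxy|hxy|e]; last first.
    by move: hx h; rewrite (val_inj e); lia.
  - have := IH (n' - x). rewrite hy in hxy. have := ltn_ord x.
    move=> hxn /(_ ltac:(lia)).
    have -> : o (n' - (n' - x)) = x by apply: val_inj; rewrite /= inordK; lia.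
    lia.
  - case: (leqP jj x) => hjx.
      by have := F1 _ _ hjx hxy; lia.
    have t1 := F4 _ hjx. rewrite hx in t1.
    have := F7 _ hjx. have -> : p x = o u by apply: val_inj; rewrite /= hx oK //; lia.
    move=> h7.
    case: (ltngtP (o u) y) => [h8|h8|e8].
    + have hju : jj <= o u by rewrite oK; lia.
      have := F1 _ _ hju h8. rewrite oK in h8; lia.
    + move: h8; rewrite hy oK; lia.
    + by move: h7 h; rewrite (val_inj e8); lia.
have M : forall u, 2 * u + 1 <= n'.+1 -> nat_of_ord (p (o (n' - u))) = u.
  move=> v; elim/ltn_ind: v => v IHv hv. apply: main => // s hs. apply: IHv => //; lia.
have -> : i = o (n' - t.-1) by apply: val_inj; rewrite /= inordK; lia.
by apply: M.
Qed.
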